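(* Let $\mathbb{I}\subseteq\mathbb{Z}$ be a discrete interval and $A$ a band operator on $\ell^2(\mathbb{I})$ with band-width $w$. Then for every $N\in\mathbb{N}$, \[ \nu_N(A)=\inf\{\nu_{j..j+N-1}(A):j..j+N-1\subseteq\mathbb{I}\}=\inf\{\nu(C):C\in\mathcal{C}_N(A)\}. \]
   Context: $a..b:=\{n\in\mathbb{Z}:a\le n\le b\}$; a discrete interval is a set of consecutive integers (finite or infinite). A band operator with band-width $w$ has matrix entries $A_{ij}=0$ for $|i-j|>w$. $\nu(T):=\inf\{\|Tx\|:\|x\|=1\}$ (for a matrix $C$, as an operator between finite-dimensional $\ell^2$ spaces); $\nu_N(A):=\inf\{\|Ax\|:\|x\|=1,\operatorname{diam}(\operatorname{supp}x)<N\}$; $\nu_{J}(A):=\inf\{\|Ax\|:\operatorname{supp}x\subseteq J,\|x\|=1\}$. $\mathcal{C}_N(A)$ is the set of $(N+2w)\times N$ matrices $C=(C_{ij})_{i\in1-w..N+w,\,j\in1..N}$ with $C_{ij}=A_{k+i,k+j}$ for some $k$ with $k+1..k+N\subseteq\mathbb{I}$, where $C_{ij}:=0$ if $A_{k+i,k+j}$ is undefined. *)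

(* Defs.v *)
From HB Require Import structures.
From mathcomp Require Import all_boot all_order all_algebra.
From mathcomp Require Import complex.
From mathcomp Require Import boolp classical_sets reals.
Set Implicit Arguments. Unset Strict Implicit. Unset Printing Implicit Defensive.
Import Order.TTheory GRing.Theory Num.Theory.
Local Open Scope ring_scope.
Local Open Scope classical_set_scope.

Section Defs.
Variable R : realType.

Definition cabs2 (z : R[i]) : R := complex.Re z ^+ 2 + complex.Im z ^+ 2.

Definition dint (a b : int) : set int := [set n | a <= n <= b].

Definition is_dinterval (I : set int) : Prop :=
  forall a b c : int, I a -> I c -> a <= b <= c -> I b.

Definition is_band (I : set int) (A : int -> int -> R[i]) (w : nat) : Prop :=
  forall i j, I i -> I j -> (w%:Z < `|i - j|) -> A i j = 0.

(* the matrix entries are bounded, so the band matrix defines a bounded operator *)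
Definition bounded_entries (I : set int) (A : int -> int -> R[i]) : Prop :=
  exists M : R, forall i j, I i -> I j -> cabs2 (A i j) <= M.

Definition l2sq (x : int -> R[i]) : R :=
  sup [set (\sum_(k < (2 * n).+1) cabs2 (x (k%:Z - n%:Z))) | n in [set: nat]].

Definition l2norm (x : int -> R[i]) : R := Num.sqrt (l2sq x).

(* restriction of a sequence to I (the output of an operator on l^2(I)) *)
Definition restr (I : set int) (y : int -> R[i]) : int -> R[i] :=
  fun i => if `[< I i >] then y i else 0.

(* action of the band matrix A (band-width w) on a sequence:
   (A x)_i = sum_j A_ij x_j, where only |i - j| <= w contributes *)
Definition bapply (A : int -> int -> R[i]) (w : nat) (x : int -> R[i]) : int -> R[i] :=
  fun i => \sum_(k < (2 * w).+1) A i (i - w%:Z + k%:Z) * x (i - w%:Z + k%:Z).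

Definition supp_in (x : int -> R[i]) (S : set int) : Prop :=
  forall k, x k != 0 -> S k.

Definition diam_lt (x : int -> R[i]) (N : nat) : Prop :=
  forall k l, x k != 0 -> x l != 0 -> (`|k - l| < N%:Z).

Definition nuN (I : set int) (A : int -> int -> R[i]) (w N : nat) : R :=
  inf [set l2norm (restr I (bapply A w x)) | x in
        [set x | supp_in x I /\ l2norm x = 1 /\ diam_lt x N]].

Definition nuJ (I : set int) (A : int -> int -> R[i]) (w : nat) (J : set int) : R :=
  inf [set l2norm (restr I (bapply A w x)) | x in
        [set x | supp_in x J /\ l2norm x = 1]].

Definition vnorm (m : nat) (v : 'cV[R[i]]_m) : R :=
  Num.sqrt (\sum_(r < m) cabs2 (v r ord0)).

Definition numx (m n : nat) (C : 'M[R[i]]_(m, n)) : R :=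
  inf [set vnorm (C *m x) | x in [set x : 'cV[R[i]]_n | vnorm x = 1]].

(* the (N+2w) x N section of A at offset k: row r <-> i = r + 1 - w
   (i in 1-w..N+w), column c <-> j = c + 1 (j in 1..N);
   entries A_{k+i,k+j}, and 0 where undefined (k+i or k+j outside I) *)
Definition section (I : set int) (A : int -> int -> R[i]) (w N : nat) (k : int)
  : 'M[R[i]]_(N + 2 * w, N) :=
  \matrix_(r < N + 2 * w, c < N)
    (if `[< I (k + r%:Z + 1 - w%:Z) /\ I (k + c%:Z + 1) >]
     then A (k + r%:Z + 1 - w%:Z) (k + c%:Z + 1) else 0).

Definition CN (I : set int) (A : int -> int -> R[i]) (w N : nat)
  : set 'M[R[i]]_(N + 2 * w, N) :=
  [set C | exists k : int, dint (k + 1) (k + N%:Z) `<=` I /\ C = section I A w N k].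

End Defs.

Arguments section {R} I A w N k.
Arguments CN {R} I A w N.

(* Main.v *)
Require Import Defs.
From HB Require Import structures.
From mathcomp Require Import all_boot all_order all_algebra.
From mathcomp Require Import complex.
From mathcomp Require Import boolp classical_sets reals.
From mathcomp Require Import zify.
Import Order.TTheory GRing.Theory Num.Theory.
Local Open Scope ring_scope.
Local Open Scope classical_set_scope.
Lemma win_ext (V : zmodType) (g : int -> V) (a b : int) (m p : nat) :
  b <= a -> a + m%:Z <= b + p%:Z -> (forall k, ~~ ((a <= k) && (k < a + m%:Z)) -> g k = 0) ->
  \sum_(r < p) g (b + r%:Z) = \sum_(r < m) g (a + r%:Z).
Proof.
move=> hba hmp hg.
set d := `|a - b|%N.
have hd : a = b + d%:Z by rewrite /d; lia.
have hp : (d + m <= p)%N by rewrite /d; lia.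
rewrite -(big_mkord xpredT (fun r => g (b + r%:Z))) (big_cat_nat _ (n:=d)) ?leq_addr //=; last by lia.
rewrite [X in _ + X](big_cat_nat _ (n:=d+m)) ?leq_addr //=.
rewrite big1_seq; last first.
  move=> i /andP[_]; rewrite mem_index_iota => /andP[_ hi]; apply: hg; apply/negP => /andP[h1 h2]; lia.
rewrite add0r [X in _ + X]big1_seq ?addr0; last first.
  move=> i /andP[_]; rewrite mem_index_iota => /andP[hi _]; apply: hg; apply/negP => /andP[h1 h2]; lia.
rewrite -{1}(add0n d) big_addn (_ : (d + m - d = m)%N); last by lia.
rewrite big_mkord.
apply: eq_bigr => i _; congr g; lia.
Qed.

Lemma win_eq (V : zmodType) (g : int -> V) (a b : int) (m p : nat) :
  (forall k, ~~ ((a <= k) && (k < a + m%:Z)) -> g k = 0) ->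
  (forall k, ~~ ((b <= k) && (k < b + p%:Z)) -> g k = 0) ->
  \sum_(r < m) g (a + r%:Z) = \sum_(r < p) g (b + r%:Z).
Proof.
move=> ha hb.
pose c := a - (`|a - b|%N)%:Z.
pose q := (`|(a + m%:Z - c)%R|%N + `|(b + p%:Z - c)%R|%N)%N.
rewrite -(@win_ext V g a c m q) ?(@win_ext V g b c p q) //; rewrite /c /q; lia.
Qed.

Lemma cabs2_ge0 (R : realType) (z : R[i]) : 0 <= cabs2 z.
Proof. by rewrite /cabs2 addr_ge0 ?sqr_ge0. Qed.

Lemma cabs2_0 (R : realType) : cabs2 (0 : R[i]) = 0.
Proof. by rewrite /cabs2 /= expr0n /= addr0. Qed.

Lemma l2sq_fin (R : realType) (y : int -> R[i]) (a : int) (m : nat) :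
  (forall k, ~~ ((a <= k) && (k < a + m%:Z)) -> y k = 0) ->
  l2sq y = \sum_(r < m) cabs2 (y (a + r%:Z)).
Proof.
move=> hy.
set T := \sum_(r < m) _.
have hf : forall k, ~~ ((a <= k) && (k < a + m%:Z)) -> cabs2 (y k) = 0.
  by move=> k /hy ->; rewrite cabs2_0.
have hS : forall n : nat, \sum_(k < (2 * n).+1) cabs2 (y (k%:Z - n%:Z)) <= T.
  move=> n.
  pose fn k := if (- n%:Z <= k) && (k <= n%:Z) then cabs2 (y k) else 0.
  have -> : \sum_(k < (2 * n).+1) cabs2 (y (k%:Z - n%:Z)) =
            \sum_(k < (2 * n).+1) fn (- n%:Z + k%:Z).
    apply: eq_bigr => k _; rewrite /fn ifT; first by congr (cabs2 (y _)); lia.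
    have := ltn_ord k; lia.
  rewrite (@win_eq _ fn _ a _ m); first last.
  - by move=> k hk; rewrite /fn hf ?if_same.
  - by move=> k hk; rewrite /fn ifF //; apply/negbTE; apply/negP => /andP[h1 h2]; move: hk; apply/negP/negPn; apply/andP; lia.
  apply: ler_sum => i _; rewrite /fn; case: ifP => _ //; exact: cabs2_ge0.
pose n0 := (absz a + m)%N.
have hT : \sum_(k < (2 * n0).+1) cabs2 (y (k%:Z - n0%:Z)) = T.
  rewrite /T (@win_eq _ (fun k => cabs2 (y k)) a (- n0%:Z) m (2 * n0).+1) //.
    by apply: eq_bigr => k _; congr (cabs2 (y _)); lia.
  move=> k hk; apply: hf; apply/negP => /andP[h1 h2]; move: hk; apply/negP/negPn; apply/andP; rewrite /n0; lia.
rewrite /l2sq; apply/le_anti/andP; split.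
  apply: ge_sup; first by exists T, n0.
  by move=> _ [n _ <-].
apply: ub_le_sup; last by exists n0.
by exists T => _ [n _ <-].
Qed.

Lemma supp0 (R : realType) (x : int -> R[i]) (S : set int) k :
  supp_in x S -> ~ S k -> x k = 0.
Proof. by move=> hx hk; case: (eqVneq (x k) 0) => // /hx. Qed.

Lemma key_F4 (R : realType) (I : set int) (A : int -> int -> R[i]) (w N : nat) (j : int)
  (x : int -> R[i]) :
  is_band I A w -> dint j (j + N%:Z - 1) `<=` I -> supp_in x (dint j (j + N%:Z - 1)) ->
  l2norm (restr I (bapply A w x)) =
  vnorm (section I A w N (j - 1) *m \col_(c < N) x (j + c%:Z)).
Proof.
move=> hb hJ hx.
rewrite /l2norm /vnorm; congr Num.sqrt.
rewrite (@l2sq_fin _ _ (j - w%:Z) (N + 2 * w)%N); last first.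
  move=> k hk; rewrite /restr; case: asboolP => // hIk.
  rewrite /bapply big1 // => t _.
  rewrite (@supp0 _ x (dint j (j + N%:Z - 1)) _) ?mulr0 //.
  rewrite /dint /= => /andP[h1 h2]; move: hk; apply/negP/negPn; apply/andP.
  have := ltn_ord t; lia.
apply: eq_bigr => r _; congr cabs2.
rewrite !mxE /restr.
have Ei : j - 1 + r%:Z + 1 - w%:Z = j - w%:Z + r%:Z by lia.
have Ec : forall c : 'I_N, j - 1 + c%:Z + 1 = j + c%:Z by move=> c; lia.
under eq_bigr => c _ do rewrite !mxE Ec.
rewrite Ei.
case: asboolP => hIi; last first.
  by rewrite big1 // => c _; rewrite asboolF ?mul0r // => -[].
have hIc : forall c : 'I_N, `[< I (j - w%:Z + r%:Z) /\ I (j + c%:Z) >].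
  move=> c; apply: asboolT; split => //; apply: hJ; rewrite /dint /=; have := ltn_ord c; lia.
under eq_bigr => c _ do rewrite hIc.
rewrite /bapply.
set i0 := j - w%:Z + r%:Z.
apply: (@win_eq _ (fun l => A i0 l * x l) (i0 - w%:Z) j (2 * w).+1 N).
  move=> l hl; case: (eqVneq (x l) 0) => [->|/hx hl2]; first by rewrite mulr0.
  rewrite hb ?mul0r //; first by apply: hJ.
  move: hl2; rewrite /dint /= => /andP[h1 h2].
  lia.
move=> l hl; rewrite (@supp0 _ x (dint j (j + N%:Z - 1)) _) ?mulr0 //.
rewrite /dint /= => /andP[h1 h2]; move: hl; apply/negP/negPn; apply/andP; lia.
Qed.

Arguments key_F4 {R I A w N j x}.
Arguments supp0 {R x S k}.

Definition xv (R : realType) (N : nat) (v : 'cV[R[i]]_N) (j : int) : int -> R[i] :=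
  fun l => if j <= l then oapp (fun c : 'I_N => v c ord0) 0 (insub `|(l - j)%R|%N) else 0.
Arguments xv {R N} v j.

Lemma xvE (R : realType) (N : nat) (j : int) (v : 'cV[R[i]]_N) (c : 'I_N) :
  xv v j (j + c%:Z) = v c ord0.
Proof.
rewrite /xv ifT; last by lia.
by rewrite (_ : `|(j + c%:Z - j)%R|%N = c) ?valK //; lia.
Qed.

Lemma xv_supp (R : realType) (N : nat) (j : int) (v : 'cV[R[i]]_N) :
  supp_in (xv v j) (dint j (j + N%:Z - 1)).
Proof.
move=> l; rewrite /xv; case: ifP => [hjl|]; last by rewrite eqxx.
case: insubP => [c _ hc _|] /=; rewrite /dint /=.
  by have := ltn_ord c; rewrite hc; lia.
by rewrite eqxx.
Qed.

Arguments xv_supp {R N j} v.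
Arguments xvE {R N j} v c.

Lemma nuJ_section (R : realType) (I : set int) (A : int -> int -> R[i]) (w N : nat) (j : int) :
  is_band I A w -> dint j (j + N%:Z - 1) `<=` I ->
  nuJ I A w (dint j (j + N%:Z - 1)) = numx (section I A w N (j - 1)).
Proof.
move=> hb hJ; rewrite /nuJ /numx; congr inf.
apply/seteqP; split => _ [x hx <-].
  case: hx => hxs hxn.
  exists (\col_(c < N) x (j + c%:Z)); last by rewrite (key_F4 hb hJ hxs).
  rewrite /= -hxn /l2norm /vnorm (@l2sq_fin _ _ j N); first by congr Num.sqrt; apply: eq_bigr => c _; rewrite mxE.
  move=> k hk; apply: (supp0 hxs); rewrite /dint /= => /andP[h1 h2]; move: hk; apply/negP/negPn; apply/andP; lia.
have Ecol : \col_(c < N) xv x j (j + c%:Z) = x.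
  by apply/matrixP => c d; rewrite mxE xvE (ord1 d).
exists (xv x j); last by rewrite (key_F4 hb hJ (@xv_supp _ _ j x)) Ecol.
split; first exact: xv_supp.
rewrite -hx /l2norm /vnorm (@l2sq_fin _ _ j N); first by congr Num.sqrt; apply: eq_bigr => c _; rewrite xvE.
move=> k hk; apply: (supp0 (@xv_supp _ _ j x)); rewrite /dint /= => /andP[h1 h2]; move: hk; apply/negP/negPn; apply/andP; lia.
Qed.

Lemma inf_bigcup (R : realType) (T : Type) (P : set T) (S : T -> set R) :
  P !=set0 -> (forall j, P j -> S j !=set0) -> (forall j, P j -> forall s, S j s -> 0 <= s) ->
  inf (\bigcup_(j in P) S j) = inf [set inf (S j) | j in P].
Proof.
move=> [j0 hj0] hne hge.
have hlbU : has_lbound (\bigcup_(j in P) S j) by exists 0 => s [j hj hs]; exact: hge hs.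
have hUne : (\bigcup_(j in P) S j) !=set0.
  by case: (hne _ hj0) => s hs; exists s, j0.
have hlbS : forall j, P j -> has_lbound (S j) by move=> j hj; exists 0 => s; exact: hge.
have hlbI : has_lbound [set inf (S j) | j in P].
  exists 0 => _ [j hj <-]; apply: lb_le_inf; first exact: hne.
  by move=> s; exact: hge.
apply/le_anti/andP; split.
  apply: lb_le_inf; first by exists (inf (S j0)), j0.
  move=> _ [j hj <-]; apply: lb_le_inf; first exact: hne.
  by move=> s hs; apply: ge_inf => //; exists j.
apply: lb_le_inf => // s [j hj hs].
apply: (@le_trans _ _ (inf (S j))); first by apply: ge_inf => //; exists j.
exact: ge_inf (hlbS _ hj) _ hs.
Qed.

Theorem lemma4p1 (R : realType) (I : set int) (A : int -> int -> R[i]) (w N : nat) :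
  is_dinterval I -> is_band I A w -> bounded_entries I A ->
  (0 < N)%N ->
  (exists j : int, dint j (j + N%:Z - 1) `<=` I) ->
  nuN I A w N =
    inf [set nuJ I A w (dint j (j + N%:Z - 1)) | j in
          [set j : int | dint j (j + N%:Z - 1) `<=` I]]
  /\
  inf [set nuJ I A w (dint j (j + N%:Z - 1)) | j in
          [set j : int | dint j (j + N%:Z - 1) `<=` I]] =
    inf [set numx C | C in CN I A w N].
Proof.
move=> hI hb _ hN [j0 hj0].
pose S j := [set l2norm (restr I (bapply A w x)) | x in
        [set x | supp_in x (dint j (j + N%:Z - 1)) /\ l2norm x = 1]].
split.
  have hge : forall j, [set j | dint j (j + N%:Z - 1) `<=` I] j -> forall s, S j s -> 0 <= s.
    by move=> j _ _ [x _ <-]; rewrite /l2norm sqrtr_ge0.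
  have hne : forall j, [set j | dint j (j + N%:Z - 1) `<=` I] j -> S j !=set0.
    move=> j hj; pose d : int -> R[i] := fun l => if l == j then 1 else 0.
    exists (l2norm (restr I (bapply A w d))), d => //; split.
      move=> l; rewrite /d; have [-> _|_] := eqVneq l j; last by rewrite eqxx.
      by rewrite /dint /=; lia.
    rewrite /l2norm (@l2sq_fin _ _ j 1%N); last first.
      by move=> k hk; rewrite /d ifF //; apply/negbTE; apply: contra hk => /eqP ->; lia.
    by rewrite big_ord1 addr0 /d eqxx /cabs2 /= expr0n /= addr0 expr1n sqrtr1.
  have hP : [set j | dint j (j + N%:Z - 1) `<=` I] !=set0 by exists j0.
  rewrite /nuN /nuJ -/S -(@inf_bigcup _ _ _ _ hP hne hge).
  congr inf; apply/seteqP; split => [_ [x hx <-]|s hs]; last first.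
    case: hs => j hj [y [hys hyn] <-]; exists y => //; split; last split => //.
      by move=> k /hys; apply: hj.
    move=> k l /hys + /hys; rewrite /dint /= => /andP[h1 h2] /andP[h3 h4]; lia.
  case: hx => hxI [hxn hxd].
  have [k0 hk0] : exists k0, x k0 != 0.
    apply/not_existsP => hall; move: hxn.
    rewrite /l2norm (@l2sq_fin _ _ 0 0) ?big_ord0 ?sqrtr0; first by move=> h; have := @oner_neq0 R; rewrite h eqxx.
    by move=> k _; have := hall k; case: eqP.
  pose Pm := fun n : nat => x (k0 - N%:Z + 1 + n%:Z) != 0.
  have exm : exists n, Pm n by exists N.-1; rewrite /Pm; congr (x _ != 0): hk0; lia.
  pose PM := fun n : nat => x (k0 + N%:Z - 1 - n%:Z) != 0.
  have exM : exists n, PM n by exists N.-1; rewrite /PM; congr (x _ != 0): hk0; lia.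
  case: (ex_minnP exm) => n1 hn1 hmin1.
  case: (ex_minnP exM) => n2 hn2 hmin2.
  have hsupp : forall k, x k != 0 ->
      k0 - N%:Z + 1 + n1%:Z <= k <= k0 + N%:Z - 1 - n2%:Z.
    move=> k hk.
    have hd := hxd _ _ hk hk0.
    have h1 := hmin1 `|(k - (k0 - N%:Z + 1))%R|%N.
    have h2 := hmin2 `|(k0 + N%:Z - 1 - k)%R|%N.
    rewrite /Pm /PM in h1 h2.
    rewrite (_ : k0 - N%:Z + 1 + `|(k - (k0 - N%:Z + 1))%R|%N%:Z = k) in h1; last by clear -hd; lia.
    rewrite (_ : k0 + N%:Z - 1 - `|(k0 + N%:Z - 1 - k)%R|%N%:Z = k) in h2; last by clear -hd; lia.
    have := h1 hk; have := h2 hk; clear -hd; lia.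
  have hmM := hxd _ _ hn1 hn2.
  have hmI := hxI _ hn1.
  have hMI := hxI _ hn2.
  have hmM' := hsupp _ hn1.
  move: hsupp hmM hmI hMI hmM'.
  rewrite /Pm /PM in hn1 hn2.
  move: (k0 - N%:Z + 1 + n1%:Z) (k0 + N%:Z - 1 - n2%:Z) => m M hsupp hmM hmI hMI hmM'.
  have hMm : M - m < N%:Z by clear -hmM hmM'; lia.
  have hmM2 : m <= M by clear -hmM'; lia.
  clear hmM hmM'.
  have hj0a : I j0 by apply: hj0; rewrite /dint /=; clear -hN; lia.
  have hj0b : I (j0 + N%:Z - 1) by apply: hj0; rewrite /dint /=; clear -hN; lia.
  have [j [hjI hjs]] : exists j, dint j (j + N%:Z - 1) `<=` I /\ (j <= m /\ M <= j + N%:Z - 1).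
    case: (ltP m j0) => hmj0.
      exists m; split; last by clear -hMm hmM2; lia.
      move=> t; rewrite /dint /= => ht; apply: (hI m t (j0 + N%:Z - 1)) => //; clear -ht hmj0; lia.
    case: (ltP (j0 + N%:Z - 1) M) => hMj0.
      exists (M - N%:Z + 1); split; last by clear -hMm hmM2; lia.
      move=> t; rewrite /dint /= => ht; apply: (hI j0 t M) => //; clear -ht hMj0; lia.
    by exists j0; split => //; clear -hmj0 hMj0; lia.
  exists j => //.
  exists x => //; split => // k /hsupp; rewrite /dint /=; clear -hjs; lia.
congr inf.
apply/seteqP; split => _ [j hj <-].
  exists (section I A w N (j - 1)); last by rewrite nuJ_section.
  exists (j - 1); split => //.
  by move=> t; rewrite /dint /= => ht; apply: hj; rewrite /dint /=; clear -ht; lia.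
case: hj => k [hk ->].
have hk' : dint (k + 1) (k + 1 + N%:Z - 1) `<=` I.
  by move=> t; rewrite /dint /= => ht; apply: hk; rewrite /dint /=; clear -ht; lia.
exists (k + 1) => //.
have -> : section I A w N k = section I A w N (k + 1 - 1) by rewrite addrK.
by rewrite nuJ_section.
Qed.
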